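(* Let $F$ be a graph on $v$ vertices and let $n\ge v$. Then $$\mathrm{exa}_1(n,F)\le \binom{v}{2}+\zeta(F)(n-v)+\mathrm{ex}(n-v,F).$$
   Context: For graphs $H$ and $F$, $\mathcal N(H,F)$ is the number of subgraphs of $H$ isomorphic to $F$. $\mathrm{exa}_1(n,F)$ is the largest number of edges of a simple graph $H$ on $n$ vertices with $\mathcal N(H,F)=1$. $\mathrm{ex}(m,F)$ is the largest number of edges of a graph on $m$ vertices with no subgraph isomorphic to $F$. For a graph $G$, $\zeta(G)$ denotes the largest integer $z$ such that one can add to a copy of $G$ a new vertex together with $z$ edges joining it to vertices of that copy, so that the resulting graph contains no copy of $G$ other than the original one. *)

(* Defs.v *)
From mathcomp Require Import all_boot.
Set Implicit Arguments. Unset Strict Implicit. Unset Printing Implicit Defensive.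

Definition simple_graph (T : finType) (E : {set {set T}}) : bool :=
  [forall e in E, #|e| == 2].

(* A subgraph of H (on vertex type T) is a pair (S, E') with S a vertex set
   and E' a set of edges of H; it is a copy of F (on vertex type V) if there is
   an injection f : V -> T with image S mapping the edge set of F onto E'. *)
Definition is_copy (T V : finType) (EH : {set {set T}}) (EF : {set {set V}})
    (p : {set T} * {set {set T}}) : bool :=
  (p.2 \subset EH) &&
  [exists f : {ffun V -> T},
     [&& injectiveb f, f @: [set: V] == p.1 &
         p.2 == [set (f @: e) | e : {set V} in EF]]].

Definition copies (T V : finType) (EH : {set {set T}}) (EF : {set {set V}}) :=
  [set p : {set T} * {set {set T}} | is_copy EH EF p].

Definition Ncopies (T V : finType) (EH : {set {set T}}) (EF : {set {set V}}) : nat :=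
  #|copies EH EF|.

(* ex(m,F): max number of edges of an F-free simple graph on m vertices
   (0 if there is no such graph). *)
Definition ex (m : nat) (V : finType) (EF : {set {set V}}) : nat :=
  \max_(E : {set {set 'I_m}} | simple_graph E && (Ncopies E EF == 0)) #|E|.

(* exa_1(n,F): max number of edges of a simple graph on n vertices containing
   exactly one copy of F (0 if there is no such graph). *)
Definition exa1 (n : nat) (V : finType) (EF : {set {set V}}) : nat :=
  \max_(E : {set {set 'I_n}} | simple_graph E && (Ncopies E EF == 1)) #|E|.

(* Adding a new vertex (None) to a copy of G (vertices Some x) joined to A. *)
Definition add_vertex (V : finType) (EG : {set {set V}}) (A : {set V})
  : {set {set option V}} :=
  [set ((@Some V) @: e) | e : {set V} in EG] :|: [set [set None; Some a] | a in A].

Definition orig_copy (V : finType) (EG : {set {set V}})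
  : {set option V} * {set {set option V}} :=
  ((@Some V) @: [set: V], [set ((@Some V) @: e) | e : {set V} in EG]).

Definition zeta_ok (V : finType) (EG : {set {set V}}) (z : nat) : bool :=
  [exists A : {set V},
     (#|A| == z) && (copies (add_vertex EG A) EG == [set orig_copy EG])].

(* zeta(G): largest such z (z <= |V(G)| necessarily); 0 if none exists. *)
Definition zeta (V : finType) (EG : {set {set V}}) : nat :=
  \max_(z < #|V|.+1 | zeta_ok EG z) z.

(* Main.v *)
Require Import Defs.
From mathcomp Require Import all_boot.
From mathcomp Require Import zify.

Lemma copy_transport (T1 T2 V : finType) (phi : T1 -> T2) (E1 : {set {set T1}})
  (E2 : {set {set T2}}) (EF : {set {set V}}) (p : {set T1} * {set {set T1}}) :
  injective phi -> {in E1, forall e : {set T1}, phi @: e \in E2} -> is_copy E1 EF p ->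
  is_copy E2 EF (phi @: p.1, [set phi @: e | e : {set T1} in p.2]).
Proof.
move=> inj hE /andP[sub /existsP[f /and3P[/injectiveP finj /eqP h1 /eqP h2]]].
apply/andP; split.
  apply/subsetP => _ /imsetP[e ep ->]; apply: hE; exact: (subsetP sub).
apply/existsP; exists [ffun x => phi (f x)]; apply/and3P; split.
- by apply/injectiveP => x y; rewrite !ffunE => /inj/finj.
- rewrite /= -h1 -imset_comp; apply/eqP/eq_imset => x; by rewrite ffunE.
- rewrite /= h2 -imset_comp; apply/eqP/eq_imset => e /=.
  rewrite -imset_comp; apply: eq_imset => x; by rewrite ffunE.
Qed.

Arguments copy_transport {T1 T2 V phi E1 E2 EF p}.

Lemma transport_inj (T1 T2 : finType) (phi : T1 -> T2)
  (p q : {set T1} * {set {set T1}}) : injective phi ->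
  (phi @: p.1, [set phi @: e | e : {set T1} in p.2]) = (phi @: q.1, [set phi @: e | e : {set T1} in q.2]) ->
  p = q.
Proof.
move=> inj [/(imset_inj inj) H1 /(imset_inj (imset_inj inj)) H2].
by case: p q H1 H2 => [? ?] [? ?] /= -> ->.
Qed.

Arguments transport_inj {T1 T2 phi p q}.

Lemma imset_preim (T1 T2 : finType) (h : T1 -> T2) (e : {set T2}) :
  e \subset h @: setT -> h @: (h @^-1: e) = e.
Proof.
move=> sub; apply/setP => x; apply/idP/idP => [/imsetP[i]|xe].
  by rewrite inE => ie ->.
have/imsetP[i _ hx] := subsetP sub x xe.
by rewrite hx imset_f // inE -hx.
Qed.

Lemma card_bigcup_le (I T : finType) (P : {pred I}) (B : I -> {set T}) :
  #|\bigcup_(i in P) B i| <= \sum_(i in P) #|B i|.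
Proof.
apply: (big_rec2 (fun (U : {set T}) s => #|U| <= s)); first by rewrite cards0.
move=> i U s _ H; rewrite cardsU; apply: leq_trans (leq_subr _ _) _.
exact: leq_add.
Qed.
Arguments card_bigcup_le {I T}.

Theorem proposition2p3 (v : nat) (EF : {set {set 'I_v}}) (n : nat) :
  0 < v -> simple_graph EF -> v <= n ->
  exa1 n EF <= 'C(v, 2) + zeta EF * (n - v) + ex (n - v) EF.
Proof.
move=> v0 sF vn; rewrite {1}/exa1.
apply/bigmax_leqP => E /andP[sE N1].
move: N1; rewrite /Ncopies => /cards1P [p0 hp0].
have p0c : is_copy E EF p0.
  have: p0 \in copies E EF by rewrite hp0 set11.
  by rewrite inE.
have uniq : forall p, is_copy E EF p -> p = p0.
  by move=> p pc; apply/set1P; rewrite -hp0 inE.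
case: p0 hp0 p0c uniq => S E0 _ p0c uniq.
case/andP: p0c => sub0 /existsP[f /and3P[/injectiveP finj /eqP hS /eqP hE0]].
rewrite /= in sub0 hS hE0.
have s2 : forall e, e \in E -> #|e| = 2.
  by move=> e eE; apply/eqP; exact: (implyP (forallP sE e) eE).
have cardS : #|S| = v by rewrite -hS card_imset // cardsT card_ord.
have Sne : f (Ordinal v0) \in S by rewrite -hS imset_f.
set P1 := [set e : {set 'I_n} | e \subset S].
set P2 := [set e : {set 'I_n} | e \subset ~: S].
rewrite -(cardsID P1 E) -(cardsID P2 (E :\: P1)).
have h1 : #|E :&: P1| <= 'C(v, 2).
  have sub1 : E :&: P1 \subset [set f @: a | a : {set 'I_v} in [set a : {set 'I_v} | #|a| == 2]].
    apply/subsetP => e; rewrite !inE => /andP[eE eS].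
    have ee : f @: (f @^-1: e) = e by apply: imset_preim; rewrite hS.
    rewrite -ee imset_f // inE -(card_imset _ finj) ee s2 //.
  apply: leq_trans (subset_leq_card sub1) _.
  apply: leq_trans (leq_imset_card _ _) _.
  by rewrite card_draws card_ord.
have h2 : #|(E :\: P1) :&: P2| <= ex (n - v) EF.
  have cm : #|~: S| = n - v by rewrite cardsCs setCK cardS card_ord.
  pose h (i : 'I_(n - v)) : 'I_n := enum_val (cast_ord (esym cm) i).
  have hinj : injective h by move=> i j /enum_val_inj /cast_ord_inj.
  have hrange : forall i, h i \in ~: S by move=> i; exact: enum_valP.
  have hrange2 : ~: S \subset h @: setT.
    apply/subsetP => x xS; apply/imsetP; exists (cast_ord cm (enum_rank_in xS x)) => //.
    by rewrite /h cast_ordK enum_rankK_in.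
  have preK : forall e, e \in (E :\: P1) :&: P2 -> h @: (h @^-1: e) = e.
    move=> e; rewrite !inE => /andP[_ eS]; apply: imset_preim.
    exact: subset_trans eS hrange2.
  set E2 := [set e : {set 'I_(n - v)} | h @: e \in E].
  rewrite -(card_in_imset (f := fun e : {set 'I_n} => h @^-1: e)); last first.
    by move=> e1 e2 H1 H2 /= eq; rewrite -(preK _ H1) eq preK.
  have sub2 : [set h @^-1: e | e : {set 'I_n} in (E :\: P1) :&: P2] \subset E2.
    apply/subsetP => _ /imsetP[e he ->]; rewrite inE preK //.
    by move: he; rewrite !inE => /andP[/andP[_ ?] _].
  apply: leq_trans (subset_leq_card sub2) _.
  rewrite /ex; apply: (leq_bigmax_cond (F := fun E : {set {set 'I_(n - v)}} => #|E|) E2); apply/andP; split.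
    apply/forallP => e; apply/implyP; rewrite inE => he.
    by rewrite -(card_imset _ hinj) (s2 _ he).
  rewrite /Ncopies cards_eq0; apply/eqP/setP => p; rewrite inE in_set0.
  apply/negP => pc.
  have side : {in E2, forall e : {set 'I_(n - v)}, h @: e \in E}.
    by move=> e; rewrite inE.
  case: (uniq _ (copy_transport hinj side pc)) => HS _.
  have := Sne; rewrite -HS => /imsetP[i _ eq].
  by move: (hrange i); rewrite -eq inE Sne.
have h3 : #|(E :\: P1) :\: P2| <= zeta EF * (n - v).
  pose A (u : 'I_n) := [set a : 'I_v | [set u; f a] \in E].
  have claim : forall u w, u \notin S -> w \in S -> [set u; w] \in E ->
      [set u; w] \in \bigcup_(u in ~: S) [set [set u; f a] | a in A u].
    move=> u w uS wS he.
    have/imsetP[a _ wa] : w \in f @: setT by rewrite hS.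
    rewrite wa in he *.
    apply/bigcupP; exists u; first by rewrite inE.
    by apply: (imset_f (fun a0 => [set u; f a0])); rewrite inE.
  have sub3 : (E :\: P1) :\: P2 \subset \bigcup_(u in ~: S) [set [set u; f a] | a in A u].
    apply/subsetP => e; rewrite !inE => /andP[nP2 /andP[nP1 eE]].
    have/cards2P [x [y [xy exy]]] : #|e| == 2 by rewrite s2.
    move: nP1 nP2 eE; rewrite exy !subUset !sub1set !in_setC.
    case: (boolP (x \in S)) => xS; case: (boolP (y \in S)) => yS //= _ _ eE.
      by rewrite setUC; apply: claim; rewrite // setUC.
    exact: claim.
  apply: leq_trans (subset_leq_card sub3) _.
  apply: leq_trans (@card_bigcup_le _ _ (~: S) (fun u => [set [set u; f a] | a in A u])) _.
  have cm : #|~: S| = n - v by rewrite cardsCs setCK cardS card_ord.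
  rewrite -cm mulnC -sum_nat_const; apply: leq_sum => u; rewrite inE => uS.
  apply: leq_trans (leq_imset_card _ _) _.
  have Hlt : #|A u| < #|'I_v|.+1 by rewrite ltnS max_card.
  rewrite /zeta.
  apply: (@leq_bigmax_cond _ _ (fun z : 'I_(#|'I_v|.+1) => nat_of_ord z) (Ordinal Hlt)).
  rewrite /=; apply/existsP; exists (A u); rewrite eqxx /=.
  pose phi (o : option 'I_v) : 'I_n := if o is Some a then f a else u.
  have fS : forall a, f a \in S by move=> a; rewrite -hS imset_f.
  have phiinj : injective phi.
    move=> [a|] [b|] //= H.
    - by rewrite (finj _ _ H).
    - by move: uS; rewrite -H fS.
    - by move: uS; rewrite H fS.
  have phiE : {in add_vertex EF (A u), forall e : {set option 'I_v}, phi @: e \in E}.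
    move=> e; rewrite inE => /orP[/imsetP[e' e'F ->]|/imsetP[a aA ->]].
      rewrite -imset_comp.
      have -> : [set (phi \o Some) x | x in e'] = f @: e' by apply: eq_imset.
      by apply: (subsetP sub0); rewrite hE0 imset_f.
    by rewrite imsetU1 imset_set1 /=; rewrite inE in aA.
  have origc : is_copy (add_vertex EF (A u)) EF (orig_copy EF).
    rewrite /is_copy /orig_copy /=; apply/andP; split; first exact: subsetUl.
    apply/existsP; exists [ffun x => Some x]; apply/and3P; split.
    - by apply/injectiveP => x y; rewrite !ffunE; case.
    - by apply/eqP/eq_imset => x; rewrite ffunE.
    - by apply/eqP/eq_imset => e; apply: eq_imset => x; rewrite ffunE.
  apply/eqP/setP => p; rewrite inE in_set1; apply/idP/eqP => [pc|->]; last exact: origc.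
  apply: (transport_inj phiinj).
  by rewrite (uniq _ (copy_transport phiinj phiE pc)) (uniq _ (copy_transport phiinj phiE origc)).
move: h1 h2 h3; set a := 'C(v, 2); set b := zeta EF * (n - v); set c := ex (n - v) EF; move=> H1 H2 H3; rewrite -addnA (addnC b c); exact: leq_add H1 (leq_add H2 H3).
Qed.
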